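(* Let $\mathfrak g = \bigoplus_i \mathfrak I_i$ be a decomposition of $\mathfrak g$ into ideals which are pairwise orthogonal for an $\mathrm{Ad}_G$-invariant nondegenerate symmetric bilinear form on $\mathfrak g$, let $\mathfrak t_i = \mathfrak t\cap\mathfrak I_i$, $\Phi_{\mathfrak I_i}$ the root system of $(\mathfrak I_i,\mathfrak t_i)$ (so that $\mathfrak t = \bigoplus_i \mathfrak t_i$, $\Phi_{\mathfrak g} = \bigsqcup_i \Phi_{\mathfrak I_i}$, and $W_{\mathfrak g} = \prod_i W_{\mathfrak I_i}$ with $W_{\mathfrak I_i} = W(\Phi_{\mathfrak I_i})$ acting on $\mathfrak t_i$ and trivially on the other summands). Let $\Phi\subseteq \Phi_{\mathfrak g}$ be a root subsystem, $\Phi^{(i)} = \Phi\cap\Phi_{\mathfrak I_i}$, $$\mathbf B = \bigcap_{\alpha\in\Phi}\ker(\alpha)\cap\bigcap_{\alpha\in\Phi_{\mathfrak g}\setminus\Phi}(\mathfrak t\setminus\ker\alpha),\qquad \mathbf B_i = \bigcap_{\alpha\in\Phi^{(i)}}\ker(\alpha)\cap\bigcap_{\alpha\in\Phi_{\mathfrak I_i}\setminus\Phi^{(i)}}(\mathfrak t_i\setminus\ker\alpha)\subseteq\mathfrak t_i .$$ Let $\overline{\mathbf B}$ be the topological quotient of $\mathbf B$ by the relation $X\sim Y$ iff $W_{\mathfrak g}X = W_{\mathfrak g}Y$, and $\overline{\mathbf B}_i$ the topological quotient of $\mathbf B_i$ by the relation $X\sim Y$ iff $W_{\mathfrak I_i}X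 = W_{\mathfrak I_i}Y$. Then $\overline{\mathbf B}$ is homeomorphic to the product $\prod_i\overline{\mathbf B}_i$.
   Context: $G$ is a connected complex reductive Lie group, $\mathfrak g = \mathrm{Lie}(G)$, $T\subseteq G$ a maximal torus, $\mathfrak t = \mathrm{Lie}(T)$, $\Phi_{\mathfrak g}$ the root system of $(\mathfrak g,\mathfrak t)$, $W_{\mathfrak g}$ the Weyl group acting on $\mathfrak t$. Roots of $\Phi_{\mathfrak I_i}$ are regarded as elements of $\mathfrak t^\vee$ vanishing on $\mathfrak t_j$ for $j\ne i$. Empty intersections of kernels are the whole ambient space. *)

(* Defs.v *)
From HB Require Import structures.
From mathcomp Require Import all_boot all_order all_algebra.
From mathcomp Require Import all_classical all_reals all_analysis.
From mathcomp Require Import complex.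
Set Implicit Arguments.
Unset Strict Implicit.
Unset Printing Implicit Defensive.
Import Order.TTheory GRing.Theory Num.Theory.
Import numFieldTopology.Exports numFieldNormedType.Exports.
Local Open Scope classical_set_scope.
Local Open Scope ring_scope.

(* The complex numbers C = R[i] over a real field R : realType, packaged
   as a numClosedFieldType so that it carries its usual (modulus) topology. *)
Definition CC (R : realType) : numClosedFieldType := (R[i]%C : numClosedFieldType).

Section Quot.
Context {T : topologicalType} (r : T -> T -> Prop).

Definition quot_class (x : T) : set T := [set y | r x y].

Definition quotient_space : Type := {S : set T | exists x, S = quot_class x}.

HB.instance Definition _ := gen_eqMixin quotient_space.
HB.instance Definition _ := gen_choiceMixin quotient_space.

Definition quot_map (x : T) : quotient_space :=
  exist _ (quot_class x) (ex_intro _ x erefl).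

Definition quot_open (U : set quotient_space) := open (quot_map @^-1` U).

Program Definition quot_topological_mixin :=
  @isOpenTopological.Build quotient_space quot_open _ _ _.
Next Obligation. by rewrite /quot_open preimage_setT; exact: openT. Qed.
Next Obligation. by move=> ? ? ? ?; exact: openI. Qed.
Next Obligation. by move=> I f ofi; apply: bigcup_open => i _; exact: ofi. Qed.
HB.instance Definition _ := quot_topological_mixin.

End Quot.

Definition homeomorphic (X Y : topologicalType) : Prop :=
  exists (f : X -> Y) (g : Y -> X),
    [/\ cancel f g, cancel g f, continuous f & continuous g].

(* Linear algebra of a Cartan subalgebra t_i = C^n (row vectors) and   *)
(* its dual (column vectors a, acting by X |-> X a).                   *)
Section RootData.
Variable K : numClosedFieldType.

Definition feval n (a : 'cV[K]_n) (X : 'rV[K]_n) : K := (X *m a) 0 0.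

(* the bilinear form on t^vee induced by the (nondegenerate, symmetric,
   invariant) form on t with Gram matrix S *)
Definition dual_pairing n (S : 'M[K]_n) (a b : 'cV[K]_n) : K :=
  (a^T *m invmx S *m b) 0 0.

(* coroot h_a = 2 t_a / (a, a), where t_a is dual to a under S *)
Definition coroot n (S : 'M[K]_n) (a : 'cV[K]_n) : 'rV[K]_n :=
  (2 / dual_pairing S a a) *: (invmx S *m a)^T.

(* reflection s_a : X |-> X - a(X) h_a, acting on row vectors on the right
   (X |-> X *m refl_mx S a); on forms it acts by b |-> refl_mx S a *m b *)
Definition refl_mx n (S : 'M[K]_n) (a : 'cV[K]_n) : 'M[K]_n :=
  1%:M - a *m coroot S a.

Definition weyl_group n (S : 'M[K]_n) (Phi : set ('cV[K]_n)) : set ('M[K]_n) :=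
  [set w | forall G : set ('M[K]_n), G 1%:M ->
      (forall v a, G v -> Phi a -> G (v *m refl_mx S a)) -> G w].

Definition is_root_system n (S : 'M[K]_n) (Phi : set ('cV[K]_n)) : Prop :=
  [/\ finite_set Phi, ~ Phi 0,
      (forall a, Phi a -> dual_pairing S a a != 0) /\
      (forall a b, Phi a -> Phi b -> Phi (refl_mx S a *m b)),
      (forall a b, Phi a -> Phi b ->
          exists z : int, feval b (coroot S a) = z%:~R)
    & (forall a c, Phi a -> Phi (c *: a) -> c = 1 \/ c = -1)].

Definition nondeg_sym_form n (S : 'M[K]_n) : Prop := S^T = S /\ S \in unitmx.

End RootData.

(* The global objects: t = (+)_i t_i, Phi_g = disjoint union of the     *)
(* Phi_{I_i} (roots of I_i extended by 0 on t_j, j <> i), W_g = prod_i  *)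
(* W_{I_i} acting componentwise.                                       *)
Unset Implicit Arguments.
Section Global.
Variables (R : realType) (I : finType) (n : I -> nat).
Variables (S : forall i, 'M[CC R]_(n i)) (PhiI : forall i, set ('cV[CC R]_(n i))).

Definition cartan : topologicalType := prod_topology (fun i => 'rV[CC R]_(n i)).

Definition groot : Type := {i : I & 'cV[CC R]_(n i)}.

Definition Phi_g : set groot := fun ia => match ia with existT i a => PhiI i a end.

Definition root_subsystem (Phi : set groot) : Prop :=
  Phi `<=` Phi_g /\
  (forall i a b, Phi (existT _ i a) -> Phi (existT _ i b) ->
     Phi (existT _ i (refl_mx (S i) a *m b))).

Definition orbit_g (X : cartan) : set cartan :=
  [set Y | exists w : forall i, 'M[CC R]_(n i),
      (forall i, weyl_group (S i) (PhiI i) (w i)) /\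
      Y = (fun i => X i *m w i)].

Definition orbit_i (i : I) (Y : 'rV[CC R]_(n i)) : set ('rV[CC R]_(n i)) :=
  [set Z | exists w, weyl_group (S i) (PhiI i) w /\ Z = Y *m w].

Variable Phi : set groot.

Definition Phi_i (i : I) : set ('cV[CC R]_(n i)) := [set a | Phi (existT _ i a)].

Definition Bset : set cartan :=
  [set X | (forall i a, Phi (existT _ i a) -> feval a (X i) = 0) /\
           (forall i a, Phi_g (existT _ i a) -> ~ Phi (existT _ i a) ->
                        feval a (X i) != 0)].

Definition Bset_i (i : I) : set ('rV[CC R]_(n i)) :=
  [set Y | (forall a, Phi_i i a -> feval a Y = 0) /\
           (forall a, PhiI i a -> ~ Phi_i i a -> feval a Y != 0)].

Definition Bbar : topologicalType :=
  quotient_space (fun X Y : set_type Bset => orbit_g (val X) = orbit_g (val Y)).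

Definition Bbar_i (i : I) : topologicalType :=
  quotient_space (fun X Y : set_type (Bset_i i) =>
                    orbit_i i (val X) = orbit_i i (val Y)).

End Global.

(* Main.v *)
Require Import Defs.
From HB Require Import structures.
From mathcomp Require Import all_boot all_order all_algebra.
From mathcomp Require Import all_classical all_reals all_analysis.
Import numFieldTopology.Exports numFieldNormedType.Exports.
Local Open Scope classical_set_scope.
Local Open Scope ring_scope.
Import Order.TTheory GRing.Theory Num.Theory.
Set Implicit Arguments. Unset Strict Implicit.
Lemma filter_forall_fin (T : Type) (J : finType) (F : set_system T) :
  Filter F -> forall A : J -> set T, (forall j, F (A j)) -> F [set y | forall j, A j y].
Proof.
move=> FF A HA.
suff H : forall s : seq J, F [set y | forall j, j \in s -> A j y].
  by apply: filterS (H (enum J)) => y Hy j; apply: Hy; rewrite mem_enum.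
elim=> [|j s IH].
  by apply: filterS filterT => y _ j.
apply: filterS (filterI (HA j) IH) => y [Ay Hy] k.
by rewrite in_cons => /orP [/eqP->//|]; exact: Hy.
Qed.

Lemma mx_continuous_entries (X T : topologicalType) m n (h : X -> 'M[T]_(m,n)) :
  (forall i j, continuous (fun x => h x i j)) -> continuous h.
Proof.
move=> hc x A [P HP sub].
apply: (@filterS _ _ _ [set y | forall p : ('I_m * 'I_n)%type, P p.1 p.2 (h y p.1 p.2)]).
  by move=> y Hy; apply: sub => i j; exact: (Hy (i, j)).
apply: filter_forall_fin => p; exact: (hc p.1 p.2 x _ (HP p.1 p.2)).
Qed.

Lemma prod_continuous_into (X : topologicalType) (I : Type) (K : I -> topologicalType)
  (h : X -> prod_topology K) :
  (forall i, continuous (fun x => h x i)) -> continuous h.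
Proof.
move=> hc x.
apply/(@cvg_sup _ _ (fun i => Topological.class (initial_topology (fun f : (forall i, K i) => f i)))) => i.
apply: (@continuous_comp_initial _ _ _ (fun f : (forall i, K i) => f i) h).
exact: hc.
Qed.

Lemma prod_nbhs_box (I : finType) (K : I -> topologicalType) (x : prod_topology K)
  (U : set (prod_topology K)) :
  nbhs x U -> exists N : forall i, set (K i),
    (forall i, nbhs (x i) (N i)) /\ (forall y : prod_topology K, (forall i, N i (y i)) -> U y).
Proof.
pose F := [set U : set (prod_topology K) | exists N : forall i, set (K i),
    (forall i, nbhs (x i) (N i)) /\ (forall y : prod_topology K, (forall i, N i (y i)) -> U y)].
have FF : Filter F.
  split.
  - by exists (fun i => setT); split => // i; exact: filterT.
  - move=> A B [N [HN sN]] [M [HM sM]]; exists (fun i => N i `&` M i); split.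
      by move=> i; exact: filterI.
    by move=> y Hy; split; [apply: sN | apply: sM] => i; case: (Hy i).
  - move=> A B AB [N [HN sN]]; exists N; split => // y Hy; exact/AB/sN.
suff : (F : set_system (prod_topology K)) --> (x : prod_topology K) by move=> /(_ U); apply.
apply/(@cvg_sup _ _ (fun i => Topological.class (initial_topology (fun f : (forall i, K i) => f i))) F x FF) => i.
move=> A [V [[W oW <-] Wx] sub].
exists (dfwith (fun j => setT) i W); split.
  move=> j; case: dfwithP => [|k ?]; last exact: filterT.
  by apply: open_nbhs_nbhs; split.
move=> y Hy; apply: sub => /=; move: (Hy i); by rewrite dfwithin.
Qed.
Section Alg.
Variables (K : numClosedFieldType) (m : nat) (S : 'M[K]_m) (P : set 'cV[K]_m).
Hypothesis hS : nondeg_sym_form S.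
Hypothesis hP : is_root_system S P.

Lemma coroot_mul (a : 'cV[K]_m) : dual_pairing S a a != 0 -> coroot S a *m a = 2%:M.
Proof.
move=> d0; rewrite /coroot -scalemxAl trmx_mul trmx_inv hS.1.
rewrite [a^T *m _ *m _]mx11_scalar -/(dual_pairing S a a) scale_scalar_mx.
by rewrite divfK.
Qed.

Lemma refl_invol a : dual_pairing S a a != 0 ->
  refl_mx S a *m refl_mx S a = 1%:M.
Proof.
move=> d0; rewrite /refl_mx; move: (coroot S a) (coroot_mul d0) => c hc.
rewrite mulmxBl mulmxBr !mul1mx mulmxBr mulmx1.
rewrite -mulmxA (mulmxA c) hc mul_scalar_mx.
rewrite -scalemxAr scaler_nat mulr2n.
by rewrite opprB addrK subrK.
Qed.

Local Notation W := (weyl_group S P).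

Lemma W1 : W 1%:M. Proof. move=> G G1 _; exact: G1. Qed.
Lemma Wstep v a : W v -> P a -> W (v *m refl_mx S a).
Proof. by move=> Wv Pa G /= G1 GS; apply: (GS) => //; exact: (Wv G G1 GS). Qed.
Lemma Wind (Q : 'M[K]_m -> Prop) : Q 1%:M ->
  (forall v a, Q v -> P a -> Q (v *m refl_mx S a)) -> forall w, W w -> Q w.
Proof. by move=> Q1 QS w Ww; exact: Ww. Qed.

Lemma Wmul u w : W u -> W w -> W (u *m w).
Proof.
move=> Wu; apply: (@Wind (fun w => W (u *m w))); first by rewrite mulmx1.
by move=> v a Wuv Pa; rewrite mulmxA; exact: Wstep.
Qed.

Lemma Wrefl a : P a -> W (refl_mx S a).
Proof. by move=> Pa; rewrite -(mul1mx (refl_mx S a)); apply: Wstep => //; exact: W1. Qed.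

Lemma Winv w : W w -> exists w', [/\ W w', w *m w' = 1%:M & w' *m w = 1%:M].
Proof.
move: w; apply: (@Wind (fun w => exists w', [/\ W w', w *m w' = 1%:M & w' *m w = 1%:M])); first by exists 1%:M; rewrite mulmx1; split => //; exact: W1.
move=> v a [v' [Wv' e1 e2]] Pa.
have d0 : dual_pairing S a a != 0 by case: hP => _ _ [h _] _ _; exact: h.
exists (refl_mx S a *m v'); split.
- by apply: Wmul => //; exact: Wrefl.
- by rewrite -mulmxA (mulmxA (refl_mx S a)) refl_invol // mul1mx.
- by rewrite -mulmxA (mulmxA v') e2 mul1mx refl_invol.
Qed.

Lemma Wperm w a : W w -> P a -> P (w *m a).
Proof.
move=> Ww; move: a; apply: (@Wind (fun w => forall a, P a -> P (w *m a))) => //.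
  by move=> a; rewrite mul1mx.
move=> v b IH Pb a Pa; rewrite -mulmxA; apply: IH.
by case: hP => _ _ [_ h] _ _; exact: h.
Qed.

End Alg.
Section QuotGen.
Context {T : topologicalType} {U : Type} (F : T -> U).
Local Notation r := (fun x y : T => F x = F y).

Lemma quot_mapE x y : quot_map r x = quot_map r y <-> F x = F y.
Proof.
split.
  move=> /(congr1 sval) /= E.
  have : quot_class r y y by [].
  by rewrite -E.
move=> E; apply: eq_sig_hprop => [? ? ?|]; first exact: Prop_irrelevance.
by rewrite /= /quot_class E.
Qed.

Definition qrep (c : quotient_space r) : T := projT1 (cid (proj2_sig c)).

Lemma qrepK c : quot_map r (qrep c) = c.
Proof.
apply: eq_sig_hprop => [? ? ?|]; first exact: Prop_irrelevance.
rewrite /qrep /=; case: (cid _) => x /= ->; done.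
Qed.

Lemma quot_openP (A : set (quotient_space r)) : open A <-> open (quot_map r @^-1` A).
Proof. by []. Qed.

Lemma quot_map_continuous : continuous (quot_map r).
Proof. by apply/continuousP => A; rewrite quot_openP. Qed.

Lemma quot_univ (Y : topologicalType) (f : quotient_space r -> Y) :
  continuous (f \o quot_map r) -> continuous f.
Proof.
move=> /continuousP fc; apply/continuousP => A oA; rewrite quot_openP.
exact: fc.
Qed.

End QuotGen.

Lemma sum_continuous (X : topologicalType) (K : numFieldType) (J : Type) (s : seq J)
  (f : J -> X -> K) : (forall j, continuous (f j)) ->
  continuous (fun x => \sum_(k <- s) f k x).
Proof.
move=> fc; elim: s => [|j s IH].
  by under eq_fun do rewrite big_nil; exact: cst_continuous.
under eq_fun do rewrite big_cons.
by move=> x; apply: continuousD; [exact: fc | exact: IH].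
Qed.

Lemma mulmx_continuous (K : numFieldType) p q r (M : 'M[K]_(q, r)) :
  continuous (fun Y : 'M[K]_(p, q) => Y *m M).
Proof.
apply: mx_continuous_entries => a b.
under eq_fun do rewrite mxE.
apply: sum_continuous => k x.
apply: (@continuousM K _ (fun Y : 'M[K]_(p, q) => Y a k) (fun=> M k b)).
  exact: coord_continuous.
exact: cst_continuous.
Qed.

Unset Implicit Arguments.
Section Main.
Variables (R : realType) (I : finType) (n : I -> nat).
Variables (S : forall i, 'M[CC R]_(n i)) (PhiI : forall i, set ('cV[CC R]_(n i))).
Hypothesis hS : forall i, nondeg_sym_form (S i).
Hypothesis hPhiI : forall i, is_root_system (S i) (PhiI i).
Variable Phi : set (groot R I n).
Hypothesis hPhi : root_subsystem R I n S PhiI Phi.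

Local Notation W i := (weyl_group (S i) (PhiI i)).
Local Notation orbi := (orbit_i R I n S PhiI).
Local Notation orbg := (orbit_g R I n S PhiI).
Local Notation B := (Bset R I n PhiI Phi).
Local Notation Bi := (Bset_i R I n PhiI Phi).

Lemma orbi_iff i Y Z : orbi i Y = orbi i Z <-> exists w, W i w /\ Y = Z *m w.
Proof.
split.
  move=> E; have : orbi i Y Y by exists 1%:M; split; [exact: W1 | rewrite mulmx1].
  by rewrite E => -[w [Ww ->]]; exists w.
move=> [w [Ww ->]].
have [w' [Ww' e1 e2]] := Winv (hS i) (hPhiI i) Ww.
apply/seteqP; split => X [u [Wu ->]].
  by exists (w *m u); split; [exact: Wmul | rewrite mulmxA].
exists (w' *m u); split; first exact: Wmul.
by rewrite !mulmxA -(mulmxA Z) e1 mulmx1.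
Qed.

Lemma orbg_iff (X Y : cartan R I n) :
  orbg X = orbg Y <-> forall i, orbi i (X i) = orbi i (Y i).
Proof.
split.
  move=> E i.
  suff H : forall X Y : cartan R I n, orbg X = orbg Y -> orbi i (X i) `<=` orbi i (Y i).
    by apply/seteqP; split; apply: H.
  move=> {}X {}Y {}E Z [u [Wu ->]].
  pose w := dfwith (fun j => 1%:M : 'M[CC R]_(n j)) i u.
  have : orbg X (fun j => X j *m w j).
    exists w; split => // j; rewrite /w.
    by case: dfwithP => // k _; exact: W1.
  rewrite E => -[v [Wv /(congr1 (fun h => h i)) /=]]; rewrite /w dfwithin => ->.
  by exists (v i).
suff H : forall X Y : cartan R I n, (forall i, orbi i (X i) = orbi i (Y i)) ->
    orbg X `<=` orbg Y.
  by move=> E; apply/seteqP; split; apply: H => // i; rewrite E.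
move=> {}X {}Y E Z [w [Ww ->]].
have H j : orbi j (Y j) (X j *m w j) by rewrite -E; exists (w j).
exists (fun j => projT1 (cid (H j))); split.
  by move=> j; case: (cid (H j)) => v [].
by apply: functional_extensionality_dep => j; case: (cid (H j)) => v [].
Qed.

Lemma Bi_move i (Y Z Y' : 'rV[CC R]_(n i)) w w' :
  Bi i Y -> Bi i Z -> Y = Z *m w -> W i w' -> w *m w' = 1%:M ->
  Bi i Y' -> Bi i (Y' *m w').
Proof.
move=> [Y0 Y1] [Z0 Z1] eY Ww' e [Y'0 Y'1].
have key a : feval (w' *m a) Y = feval a Z.
  by rewrite /feval mulmxA eY -(mulmxA Z) e mulmx1.
have fE a X : feval a (X *m w') = feval (w' *m a) X by rewrite /feval mulmxA.
have sub a : Phi_i R I n Phi i a -> PhiI i a.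
  by move=> h; exact: (hPhi.1 _ h).
split.
- move=> a Pa; rewrite fE; apply: Y'0.
  have Pwa : PhiI i (w' *m a) := Wperm (hPhiI i) Ww' (sub _ Pa).
  have [//|nP] := pselect (Phi_i R I n Phi i (w' *m a)).
  by move: (Y1 _ Pwa nP); rewrite key Z0 // eqxx.
- move=> a Pa nPa; rewrite fE; apply: Y'1; first exact: (Wperm (hPhiI i) Ww' Pa).
  by move=> h; move: (Z1 a Pa nPa); rewrite -key Y0 // eqxx.
Qed.


Lemma B_proj (X : cartan R I n) i : B X -> Bi i (X i).
Proof. by move=> [h0 h1]; split => a; [exact: h0 | exact: h1]. Qed.

Lemma B_glue (X : cartan R I n) : (forall i, Bi i (X i)) -> B X.
Proof. by move=> h; split => i a; [exact: (h i).1 | exact: (h i).2]. Qed.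

Local Notation T := (set_type B).
Local Notation Ti i := (set_type (Bi i)).
Local Notation Fg := (fun X : T => orbg (\val X)).
Local Notation Fi i := (fun Y : Ti i => orbi i (\val Y)).

Definition projB i (X : T) : Ti i :=
  exist _ (sval X i) (mem_set (B_proj (sval X) i (set_mem (proj2_sig X)))).
Definition glue (y : forall i, Ti i) : T :=
  exist _ (fun i => sval (y i)) (mem_set (B_glue (fun i => sval (y i)) (fun i => set_mem (proj2_sig (y i))))).

Local Notation qB := (quot_map (fun x y : T => Fg x = Fg y)).
Local Notation qi i := (quot_map (fun x y : Ti i => Fi i x = Fi i y)).

Definition fmap (c : Bbar R I n S PhiI Phi) : prod_topology (fun i => Bbar_i R I n S PhiI Phi i) :=
  fun i => qi i (projB i (qrep (F := Fg) c)).
Definition gmap (y : prod_topology (fun i => Bbar_i R I n S PhiI Phi i)) : Bbar R I n S PhiI Phi :=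
  qB (glue (fun i => qrep (F := Fi i) (y i))).

Lemma Fg_glue (X : T) (Z : forall i, Ti i) :
  Fg X = Fg (glue Z) <-> forall i, Fi i (projB i X) = Fi i (Z i).
Proof. exact: orbg_iff. Qed.

Lemma fmapK : cancel fmap gmap.
Proof.
move=> c; rewrite /gmap /fmap -[RHS](qrepK (F := Fg) c); apply/quot_mapE.
symmetry; apply/Fg_glue => i.
by symmetry; apply/(quot_mapE (Fi i)); rewrite qrepK.
Qed.

Lemma gmapK : cancel gmap fmap.
Proof.
move=> y; apply: functional_extensionality_dep => i.
rewrite /fmap /gmap -[RHS](qrepK (F := Fi i) (y i)); apply/quot_mapE.
have /quot_mapE := qrepK (F := Fg) (qB (glue (fun i => qrep (F := Fi i) (y i)))).
by move/Fg_glue; apply.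
Qed.


Lemma projB_continuous i : continuous (projB i).
Proof.
apply: (@continuous_comp_initial _ T _ set_val (projB i)).
rewrite set_valE.
have -> : (\val \o projB i) = (fun X : T => proj i (set_val X)).
  by apply: funext => X; rewrite set_valE.
move=> x; apply: continuous_comp; first exact: initial_continuous.
exact: proj_continuous.
Qed.

Lemma fmap_continuous : continuous fmap.
Proof.
apply: quot_univ.
have -> : fmap \o qB = (fun X i => qi i (projB i X)).
  apply: funext => X; apply: functional_extensionality_dep => i.
  rewrite /fmap /=; apply/(quot_mapE (Fi i)).
  have /(quot_mapE Fg) := qrepK (F := Fg) (qB X).
  by move/orbg_iff => h; exact: h i.
apply: prod_continuous_into => i x; apply: continuous_comp.
  exact: projB_continuous.
exact: quot_map_continuous.
Qed.

Lemma qi_open i (N : set 'rV[CC R]_(n i)) : open N ->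
  open (qi i @` (sval @^-1` N) : set (Bbar_i R I n S PhiI Phi i)).
Proof.
move=> oN; apply/quot_openP.
pose Good := [set p : 'M[CC R]_(n i) * 'M[CC R]_(n i) |
  [/\ W i p.1, W i p.2, p.1 *m p.2 = 1%:M, p.2 *m p.1 = 1%:M &
      exists Y Z, [/\ Bi i Y, Bi i Z & Y = Z *m p.1]]].
pose O := \bigcup_(p in Good) [set Y' : 'rV[CC R]_(n i) | N (Y' *m p.2)].
have oO : open O.
  apply: bigcup_open => p _.
  by move: (mulmx_continuous (K := CC R) (p := 1) (M := p.2)) => /continuousP; apply.
exists O => //.
rewrite set_valE; apply/seteqP; split => Y'.
- move=> [p [Wp1 Wp2 e12 e21 [Y [Z [BY BZ eY]]]] hN].
  have BZ' : Bi i (sval Y' *m p.2).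
    exact: (Bi_move i Y Z (sval Y') p.1 p.2 BY BZ eY Wp2 e12 (set_mem (proj2_sig Y'))).
  exists (exist (fun x => x \in Bi i) _ (mem_set BZ')) => //.
  apply/(quot_mapE (Fi i)) => /=.
  symmetry; apply/orbi_iff; exists p.1; split => //.
  by rewrite -mulmxA e21 mulmx1.
- move=> [Z' hZ' E]; move/(quot_mapE (Fi i)): E => /= E.
  symmetry in E; have [w [Ww eY]] := (orbi_iff i _ _).1 E.
  have [w' [Ww' e1 e2]] := Winv (hS i) (hPhiI i) Ww.
  exists (w, w') => /=.
    split => //; exists (sval Y'), (sval Z'); split => //; [exact: (set_mem (proj2_sig Y')) | exact: (set_mem (proj2_sig Z'))].
  by rewrite eY -mulmxA e1 mulmx1.
Qed.

Lemma gmap_continuous : continuous gmap.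
Proof.
apply/continuousP => V oV; rewrite openE => y /= gyV.
rewrite /interior.
pose Z := fun i => qrep (F := Fi i) (y i).
move/quot_openP: oV => [Ob oOb EOb].
have OG : Ob (sval (glue Z)).
  have : (qB @^-1` V) (glue Z) := gyV.
  by rewrite -EOb set_valE.
have [N [HN sN]] := prod_nbhs_box (open_nbhs_nbhs (conj oOb OG)).
pose M i := qi i @` (sval @^-1` (N i)°) : set (Bbar_i R I n S PhiI Phi i).
have oM i : open (M i) := qi_open i _ (open_interior _).
have My i : M i (y i).
  by exists (Z i); [exact: (HN i) | exact: qrepK].
apply: (@filterS _ _ _ [set z | forall i, M i (z i)]).
  move=> z Mz.
  pose Zc i := projT1 (cid2 (Mz i)).
  have ZcN i : (N i)° (sval (Zc i)) by rewrite /Zc; case: (cid2 (Mz i)).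
  have Zcq i : qi i (Zc i) = z i by rewrite /Zc; case: (cid2 (Mz i)).
  rewrite /= /gmap.
  have -> : qB (glue (fun i => qrep (F := Fi i) (z i))) = qB (glue Zc).
    apply/(quot_mapE Fg); apply/orbg_iff => i /=.
    by apply/(quot_mapE (Fi i)); rewrite qrepK Zcq.
  change ((qB @^-1` V) (glue Zc)); rewrite -EOb set_valE /=.
  by apply: sN => i; apply: (@interior_subset _ (N i)); exact: ZcN.
apply: filter_forall_fin => i.
exact: (proj_continuous (i := i) (open_nbhs_nbhs (conj (oM i) (My i)))).
Qed.

End Main.

Theorem corollary3p1 (R : realType) (I : finType) (n : I -> nat)
  (S : forall i, 'M[CC R]_(n i)) (PhiI : forall i, set ('cV[CC R]_(n i)))
  (hS : forall i, nondeg_sym_form (S i))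
  (hPhiI : forall i, is_root_system (S i) (PhiI i))
  (Phi : set (groot R I n))
  (hPhi : root_subsystem R I n S PhiI Phi) :
  homeomorphic (Bbar R I n S PhiI Phi)
               (prod_topology (fun i : I => Bbar_i R I n S PhiI Phi i)).
Proof.
exists (fmap R I n S PhiI Phi), (gmap R I n S PhiI Phi); split.
- exact: fmapK.
- exact: gmapK.
- exact: fmap_continuous.
- exact: (@gmap_continuous R I n S PhiI hS hPhiI Phi hPhi).
Qed.
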